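(* Let $\mathcal R$ be a left-linear TRS. (1) If $t \leftarrow^{p}_{\mathcal R} s \to^{\epsilon}_{\mathcal B^\pm} u$ is a critical peak (from an overlap of a rule of $\mathcal R$ at position $p$ into a pair of $\mathcal B^\pm$), then there is a term $v$ with $t\,\nabla_s\, v$ and $v\,\tilde\nabla_s\, u$. (2) If $t \leftarrow^{p}_{\mathcal B^\pm} s \to^{\epsilon}_{\mathcal R} u$ is a critical peak (from an overlap of a pair of $\mathcal B^\pm$ at position $p$ into a rule of $\mathcal R$), then there is a term $v$ with $v\,\tilde\nabla_s\, t$ and $v\,\nabla_s\, u$.
   Context: Terms are built from a signature $\mathcal F$ and variables $\mathcal V$. A rule $\ell\to r$ is a pair of terms with $\ell\notin\mathcal V$ and $\mathrm{Var}(r)\subseteq\mathrm{Var}(\ell)$; a TRS is a set of rules, an ES a set of equations. For a set $\mathcal E$ of pairs of terms, $s\to_{\mathcal E}t$ iff $s|_p=\ell\sigma$ and $t=s[r\sigma]_p$ for some $(\ell,r)\in\mathcal E$, position $p$ and substitution $\sigma$ (written $\to^p_{\mathcal E}$ to make $p$ explicit); $\leftarrow_{\mathcal E}$ is its inverse and $\leftrightarrow_{\mathcal E}$ its symmetric closure. $\mathcal B$ is a fixed ES with $\mathrm{Var}(\ell)=\mathrm{Var}(r)$ for all $\ell\approx r\in\mathcal B$; $\sim_{\mathcal B}=\leftrightarrow^*_{\mathcal B}$ and $\mathcal B^\pm=\mathcal B\cup\{t\approx s\mid s\approx t\in\mathcal B\}$. For a TRS $\mathcal R$: $\downarrow_{\mathcal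 R}=\to^*_{\mathcal R}\cdot\leftarrow^*_{\mathcal R}$ and $s\downarrow^\sim_{\mathcal R}t$ iff $s\to^*_{\mathcal R}\cdot\sim_{\mathcal B}\cdot\leftarrow^*_{\mathcal R}t$. Critical pairs: for sets of oriented pairs $\mathcal R_1,\mathcal R_2$ (equations of $\mathcal B^\pm$ read as oriented pairs), an overlap is $\langle\ell_1\to r_1,p,\ell_2\to r_2\rangle$ with $\ell_i\to r_i$ variants of elements of $\mathcal R_i$ without common variables, $p$ a non-variable position of $\ell_2$, $\ell_1$ and $\ell_2|_p$ unifiable, and the two rules not variants of each other if $p=\epsilon$. With an mgu $\sigma$ this yields the critical peak $\ell_2\sigma[r_1\sigma]_p\leftarrow^p\ell_2\sigma\to^\epsilon r_2\sigma$ and critical pair $\ell_2\sigma[r_1\sigma]_p\approx r_2\sigma$. A critical peak $t\leftarrow^p s\to^\epsilon u$ is prime if all proper subterms of $s|_p$ are normal forms of $\to_{\mathcal R}$ (irreducibility is always checked w.r.t. $\mathcal R$, also for overlaps involving $\mathcal B^\pm$). $\mathrm{PCP}(\mathcal R)$ is the set of prime critical pairs from overlaps of $\mathcal R$ with itself; $\mathrm{PCP}^\pm(\mathcal R,\mathcal B^\pm)$ is the set of prime critical pairs from overlaps $\langle\rho_1,p,\rho_2\rangle$ with $\rho_1\in\mathcal R,\rho_2\in\mathcal B^\pm$ or $\rho_1\in\mathcal B^\pm,\rho_2\in\mathcal R$. Triangle notation: $t\,\nabla_s\,u$ iff $s\to^+_{\mathcal R}t$, $s\to^+_{\mathcal R}u$,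 and ($t\downarrow_{\mathcal R}u$ or $t\leftrightarrow_{\mathrm{PCP}(\mathcal R)}u$). $t\,\tilde\nabla_s\,u$ iff $s\to^+_{\mathcal R}t$, $s\sim_{\mathcal B}u$, and ($t\downarrow^\sim_{\mathcal R}u$ or $t\leftrightarrow_{\mathrm{PCP}^\pm(\mathcal R,\mathcal B^\pm)}u$). *)

(* Defs.v *)
From Stdlib Require Import List Relations.
Import ListNotations.
Set Implicit Arguments.

Section Terms.
Variable F : Type.

(* Terms over function symbols F and variables nat (symbols are unranked). *)
Inductive term : Type :=
| Var : nat -> term
| Fun : F -> list term -> term.

Fixpoint vars (t : term) : list nat :=
  match t with
  | Var x => [x]
  | Fun _ ts => (fix go (l : list term) : list nat :=
                   match l with [] => [] | u :: l' => vars u ++ go l' end) ts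
  end.

Fixpoint subst (s : nat -> term) (t : term) : term :=
  match t with
  | Var x => s x
  | Fun f ts => Fun f (map (subst s) ts)
  end.

(* subterm at a position (positions are lists of 0-based argument indices) *)
Fixpoint subterm_at (t : term) (p : list nat) : option term :=
  match p with
  | [] => Some t
  | i :: q => match t with
              | Var _ => None
              | Fun _ ts => match nth_error ts i with
                            | Some u => subterm_at u q
                            | None => None
                            end
              end
  end.

(* t[u]_p (unchanged if p is not a position of t) *)
Fixpoint replace_at (t : term) (p : list nat) (u : term) : term :=
  match p with
  | [] => u
  | i :: q => match t with
              | Var _ => t
              | Fun f ts =>
                  Fun f ((fix go (k : nat) (l : list term) : list term :=
                            match l, k with
                            | [], _ => []
                            | a :: l', 0 => replace_at a q u :: l'
                            | a :: l', S k' => a :: go k' l'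
                            end) i ts)
              end
  end.

Definition trs := term -> term -> Prop.

Definition is_trs (R : trs) : Prop :=
  forall l r, R l r -> (forall x, l <> Var x) /\ (forall x, In x (vars r) -> In x (vars l)).

Definition left_linear (R : trs) : Prop := forall l r, R l r -> NoDup (vars l).

Definition same_vars_es (B : trs) : Prop :=
  forall l r, B l r -> forall x, In x (vars l) <-> In x (vars r).

Definition sym_pairs (B : trs) : trs := fun l r => B l r \/ B r l.

Definition rstep_at (E : trs) (p : list nat) (s t : term) : Prop :=
  exists l r sg, E l r /\ subterm_at s p = Some (subst sg l) /\ t = replace_at s p (subst sg r).

Definition rstep (E : trs) (s t : term) : Prop := exists p, rstep_at E p s t.

Definition conv_step (E : trs) (s t : term) : Prop := rstep E s t \/ rstep E t s.

Definition plus_step (R : trs) := clos_trans term (rstep R).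
Definition star_step (R : trs) := clos_refl_trans term (rstep R).

Definition simB (B : trs) := clos_refl_trans term (conv_step B).

Definition joinable (R : trs) (t u : term) : Prop :=
  exists w, star_step R t w /\ star_step R u w.

Definition joinable_mod (R B : trs) (t u : term) : Prop :=
  exists w1 w2, star_step R t w1 /\ simB B w1 w2 /\ star_step R u w2.

Definition normal_form (R : trs) (t : term) : Prop := forall t', ~ rstep R t t'.

Definition bijective_ren (pi : nat -> nat) : Prop :=
  exists pi', forall x, pi' (pi x) = x /\ pi (pi' x) = x.

Definition rename (pi : nat -> nat) (t : term) : term := subst (fun x => Var (pi x)) t.

Definition variant_rules (l1 r1 l2 r2 : term) : Prop :=
  exists pi, bijective_ren pi /\ l1 = rename pi l2 /\ r1 = rename pi r2.

Definition variant_of (E : trs) (l' r' : term) : Prop :=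
  exists l r, E l r /\ variant_rules l' r' l r.

Definition unifies (sg : nat -> term) (a b : term) : Prop := subst sg a = subst sg b.

Definition is_mgu (sg : nat -> term) (a b : term) : Prop :=
  unifies sg a b /\
  forall tau, unifies tau a b -> exists dl, forall x, tau x = subst dl (sg x).

Definition critical_peak (R1 R2 : trs) (t s u : term) (p : list nat) : Prop :=
  exists l1 r1 l2 r2 sg l2p,
    variant_of R1 l1 r1 /\ variant_of R2 l2 r2 /\
    (forall x, In x (vars l1 ++ vars r1) -> ~ In x (vars l2 ++ vars r2)) /\
    subterm_at l2 p = Some l2p /\ (forall x, l2p <> Var x) /\
    (p = [] -> ~ variant_rules l1 r1 l2 r2) /\
    is_mgu sg l1 l2p /\
    s = subst sg l2 /\ t = replace_at s p (subst sg r1) /\ u = subst sg r2.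

Definition prime_peak (R : trs) (s : term) (p : list nat) : Prop :=
  forall sp, subterm_at s p = Some sp ->
  forall q w, q <> [] -> subterm_at sp q = Some w -> normal_form R w.

Definition PCP (R : trs) : trs := fun t u =>
  exists s p, critical_peak R R t s u p /\ prime_peak R s p.

Definition PCPpm (R Bpm : trs) : trs := fun t u =>
  exists s p, (critical_peak R Bpm t s u p \/ critical_peak Bpm R t s u p) /\ prime_peak R s p.

Definition nabla (R : trs) (s t u : term) : Prop :=
  plus_step R s t /\ plus_step R s u /\ (joinable R t u \/ conv_step (PCP R) t u).

Definition tnabla (R B : trs) (s t u : term) : Prop :=
  plus_step R s t /\ simB B s u /\
  (joinable_mod R B t u \/ conv_step (PCPpm R (sym_pairs B)) t u).

End Terms.

(* Main.v *)
Require Import Defs.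
From Stdlib Require Import List Relations Arith Lia Classical.
Import ListNotations.

Arguments Var {F} _.

Fixpoint term_ind' {F} (P : term F -> Prop) (HV : forall x, P (Var x))
  (HF : forall f ts, Forall P ts -> P (Fun f ts)) (t : term F) : P t :=
  match t with
  | Var x => HV x
  | Fun f ts => HF f ts ((fix go (l : list (term F)) : Forall P l :=
       match l with [] => Forall_nil _ | a :: l' => Forall_cons _ (@term_ind' F P HV HF a) (go l') end) ts)
  end.

Fixpoint size {F} (t : term F) : nat :=
  match t with Var _ => 1 | Fun _ ts => S (list_sum (map size ts)) end.

Lemma vars_Fun {F} (f : F) ts : vars (Fun f ts) = flat_map (@vars F) ts.
Proof. induction ts; simpl; auto. Qed.

Lemma subst_subst {F} (s1 s2 : nat -> term F) t :
  subst s2 (subst s1 t) = subst (fun x => subst s2 (s1 x)) t.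
Proof.
  induction t using term_ind'; simpl; auto.
  f_equal. rewrite map_map. apply map_ext_in. rewrite Forall_forall in H. auto.
Qed.

Lemma subst_ext_vars {F} (s1 s2 : nat -> term F) t :
  (forall x, In x (vars t) -> s1 x = s2 x) -> subst s1 t = subst s2 t.
Proof.
  induction t using term_ind'; intros Hx.
  - apply Hx; simpl; auto.
  - simpl. f_equal. apply map_ext_in. rewrite Forall_forall in H. intros a Ha. apply H; auto.
    intros x Hx'. apply Hx. rewrite vars_Fun. apply in_flat_map. eauto.
Qed.

Lemma subst_Var {F} (t : term F) : subst Var t = t.
Proof.
  induction t using term_ind'; simpl; auto. f_equal.
  rewrite Forall_forall in H. rewrite <- (map_id ts) at 2. apply map_ext_in. auto.
Qed.

Lemma vars_subst {F} (s : nat -> term F) t y :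
  In y (vars (subst s t)) -> exists z, In z (vars t) /\ In y (vars (s z)).
Proof.
  induction t using term_ind'; intros Hy.
  - exists x; simpl; auto.
  - simpl subst in Hy. rewrite vars_Fun in Hy. rewrite vars_Fun. apply in_flat_map in Hy.
    destruct Hy as [b [Hb Hyb]]. apply in_map_iff in Hb. destruct Hb as [a [<- Ha]].
    rewrite Forall_forall in H. destruct (H a Ha Hyb) as [z [Hz1 Hz2]].
    exists z; split; auto. apply in_flat_map; eauto.
Qed.

Lemma vars_subst2 {F} (s : nat -> term F) t z y :
  In z (vars t) -> In y (vars (s z)) -> In y (vars (subst s t)).
Proof.
  induction t using term_ind'; intros Hz Hy.
  - simpl in *. destruct Hz as [<-|[]]; auto.
  - simpl subst. rewrite vars_Fun in *. apply in_flat_map in Hz. destruct Hz as [a [Ha Hza]].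
    apply in_flat_map. exists (subst s a). split. apply in_map; auto.
    rewrite Forall_forall in H. auto.
Qed.

Lemma size_pos {F} (t : term F) : 0 < size t.
Proof. destruct t; simpl; lia. Qed.

Lemma size_In {F} (f : F) ts a : In a ts -> size a < size (Fun f ts).
Proof.
  intros H. simpl. induction ts; simpl in *. destruct H.
  destruct H as [->|H]; [lia|]. specialize (IHts H). lia.
Qed.

Lemma size_var_le {F} (s : nat -> term F) t x :
  In x (vars t) -> size (s x) <= size (subst s t).
Proof.
  induction t using term_ind'; intros Hx.
  - simpl in *. destruct Hx as [<-|[]]; auto.
  - rewrite vars_Fun in Hx. apply in_flat_map in Hx. destruct Hx as [a [Ha Hxa]].
    rewrite Forall_forall in H. specialize (H a Ha Hxa).
    assert (size (subst s a) < size (subst s (Fun f ts))).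
    { simpl subst. apply size_In. apply in_map; auto. }
    lia.
Qed.

Lemma size_var_lt {F} (s : nat -> term F) t x :
  In x (vars t) -> t <> Var x -> size (s x) < size (subst s t).
Proof.
  destruct t as [y|f ts]; intros Hx Hne.
  - simpl in *. destruct Hx as [<-|[]]; congruence.
  - rewrite vars_Fun in Hx. apply in_flat_map in Hx. destruct Hx as [a [Ha Hxa]].
    pose proof (size_var_le s a x Hxa).
    assert (size (subst s a) < size (subst s (Fun f ts))).
    { simpl subst. apply size_In. apply in_map; auto. }
    lia.
Qed.
Fixpoint upd_nth {A} (g : A -> A) (k : nat) (l : list A) : list A :=
  match l, k with
  | [], _ => []
  | a :: l', 0 => g a :: l'
  | a :: l', S k' => a :: upd_nth g k' l'
  end.

Lemma replace_Fun {F} (f : F) ts i q u :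
  replace_at (Fun f ts) (i :: q) u = Fun f (upd_nth (fun a => replace_at a q u) i ts).
Proof.
  simpl. f_equal. revert i. induction ts; intros [|i]; simpl; auto. f_equal. auto.
Qed.

Lemma upd_ext {A} (g h : A -> A) ts i a :
  nth_error ts i = Some a -> g a = h a -> upd_nth g i ts = upd_nth h i ts.
Proof.
  revert i; induction ts; intros [|i]; simpl; intros H1 H2; try discriminate.
  - inversion H1; subst. congruence.
  - f_equal; eauto.
Qed.

Lemma upd_nth_same {A} (g : A -> A) ts i a :
  nth_error ts i = Some a -> nth_error (upd_nth g i ts) i = Some (g a).
Proof.
  revert i; induction ts; intros [|i]; simpl; intros H1; try discriminate.
  - inversion H1; subst; auto.
  - eauto.
Qed.

Lemma upd_upd {A} (g h : A -> A) ts i :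
  upd_nth h i (upd_nth g i ts) = upd_nth (fun a => h (g a)) i ts.
Proof. revert i; induction ts; intros [|i]; simpl; auto. f_equal; auto. Qed.

Lemma upd_map {A B} (m : A -> B) (g : A -> A) (g' : B -> B) ts i a :
  nth_error ts i = Some a -> m (g a) = g' (m a) ->
  map m (upd_nth g i ts) = upd_nth g' i (map m ts).
Proof.
  revert i; induction ts; intros [|i]; simpl; intros H1 H2; try discriminate.
  - inversion H1; subst. congruence.
  - f_equal; eauto.
Qed.

Lemma upd_app {A} (g : A -> A) pre a post :
  upd_nth g (length pre) (pre ++ a :: post) = pre ++ g a :: post.
Proof. induction pre; simpl; auto. f_equal; auto. Qed.

Lemma upd_id {A} (g : A -> A) ts i a :
  nth_error ts i = Some a -> g a = a -> upd_nth g i ts = ts.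
Proof.
  revert i; induction ts; intros [|i]; simpl; intros H1 H2; try discriminate.
  - inversion H1; subst. congruence.
  - f_equal; eauto.
Qed.

Lemma subterm_app {F} (t : term F) p q :
  subterm_at t (p ++ q) = match subterm_at t p with Some u => subterm_at u q | None => None end.
Proof.
  revert t; induction p; intros t; simpl; auto.
  destruct t; auto. destruct (nth_error l a); auto.
Qed.

Lemma subterm_app_Some {F} (t u : term F) p q :
  subterm_at t p = Some u -> subterm_at t (p ++ q) = subterm_at u q.
Proof. intros H. rewrite subterm_app, H. auto. Qed.

Lemma replace_app {F} (t u w : term F) p q :
  subterm_at t p = Some u -> replace_at t (p ++ q) w = replace_at t p (replace_at u q w).
Proof.
  revert t; induction p; intros t H; simpl in H.
  - inversion H; subst. reflexivity.
  - destruct t as [x|f ts]; try discriminate.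
    destruct (nth_error ts a) as [b|] eqn:E; try discriminate.
    simpl app. rewrite !replace_Fun. f_equal. eapply upd_ext; eauto.
Qed.

Lemma subterm_replace {F} (t u w : term F) p :
  subterm_at t p = Some u -> subterm_at (replace_at t p w) p = Some w.
Proof.
  revert t; induction p; intros t H; simpl in H; auto.
  destruct t as [x|f ts]; try discriminate.
  destruct (nth_error ts a) as [b|] eqn:E; try discriminate.
  rewrite replace_Fun. simpl. erewrite upd_nth_same; eauto.
Qed.

Lemma replace_replace {F} (t u w w' : term F) p :
  subterm_at t p = Some u -> replace_at (replace_at t p w) p w' = replace_at t p w'.
Proof.
  revert t; induction p; intros t H; simpl in H; auto.
  destruct t as [x|f ts]; try discriminate.
  destruct (nth_error ts a) as [b|] eqn:E; try discriminate.
  rewrite !replace_Fun. f_equal. rewrite upd_upd. eapply upd_ext; eauto.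
Qed.

Lemma replace_self {F} (t u : term F) p :
  subterm_at t p = Some u -> replace_at t p u = t.
Proof.
  revert t; induction p; intros t H; simpl in H.
  - inversion H; subst. reflexivity.
  - destruct t as [x|f ts]; try discriminate.
    destruct (nth_error ts a) as [b|] eqn:E; try discriminate.
    rewrite replace_Fun. f_equal. eapply upd_id; eauto.
Qed.

Lemma subterm_subst {F} (s : nat -> term F) a b q :
  subterm_at a q = Some b -> subterm_at (subst s a) q = Some (subst s b).
Proof.
  revert a; induction q; intros t H; simpl in H.
  - inversion H; subst. reflexivity.
  - destruct t as [x|f ts]; try discriminate.
    destruct (nth_error ts a) as [c|] eqn:E; try discriminate.
    simpl. rewrite nth_error_map, E. simpl. auto.
Qed.

Lemma replace_subst {F} (s : nat -> term F) a b c q :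
  subterm_at a q = Some b -> subst s (replace_at a q c) = replace_at (subst s a) q (subst s c).
Proof.
  revert a; induction q; intros t H; simpl in H.
  - reflexivity.
  - destruct t as [x|f ts]; try discriminate.
    destruct (nth_error ts a) as [d|] eqn:E; try discriminate.
    rewrite !replace_Fun. simpl subst. rewrite !replace_Fun. f_equal. eapply upd_map; eauto.
Qed.

Lemma subterm_vars {F} (a b : term F) q :
  subterm_at a q = Some b -> incl (vars b) (vars a).
Proof.
  revert a; induction q; intros t H; simpl in H.
  - inversion H; subst. apply incl_refl.
  - destruct t as [x|f ts]; try discriminate.
    destruct (nth_error ts a) as [d|] eqn:E; try discriminate.
    intros y Hy. rewrite vars_Fun. apply in_flat_map. exists d. split.
    eapply nth_error_In; eauto. eapply IHq; eauto.
Qed.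

Lemma pos_split {F} (s : nat -> term F) a q w :
  subterm_at (subst s a) q = Some w ->
  (exists a', subterm_at a q = Some a' /\ (forall x, a' <> Var x) /\ w = subst s a') \/
  (exists q1 q2 x, q = q1 ++ q2 /\ subterm_at a q1 = Some (Var x) /\ subterm_at (s x) q2 = Some w).
Proof.
  revert a; induction q; intros t H.
  - destruct t as [x|f ts].
    + right. exists [], [], x. simpl in *. auto.
    + left. exists (Fun f ts). simpl in *. inversion H; subst. split; auto. split; auto. congruence.
  - destruct t as [x|f ts].
    + right. exists [], (a :: q), x. simpl in *. auto.
    + simpl in H. rewrite nth_error_map in H.
      destruct (nth_error ts a) as [d|] eqn:E; simpl in H; try discriminate.
      destruct (IHq d H) as [[a' [H1 [H2 H3]]]|[q1 [q2 [x [H1 [H2 H3]]]]]].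
      * left. exists a'. simpl. rewrite E. auto.
      * right. exists (a :: q1), q2, x. simpl. rewrite E. subst. auto.
Qed.
Lemma rstep_ctx {F} (E : trs F) p q s a b :
  rstep_at E q a b -> subterm_at s p = Some a -> rstep_at E (p ++ q) s (replace_at s p b).
Proof.
  intros [l [r [sg [H1 [H2 H3]]]]] Hs. exists l, r, sg. split; auto. split.
  - rewrite (subterm_app_Some _ _ _ _ Hs). auto.
  - subst b. rewrite (replace_app _ _ _ _ _ Hs). auto.
Qed.

Lemma star_ctx {F} (E : trs F) p a b :
  star_step E a b -> forall s, subterm_at s p = Some a -> star_step E s (replace_at s p b).
Proof.
  intros H. apply clos_rt_rt1n in H. induction H; intros s Hs.
  - rewrite (replace_self _ _ _ Hs). apply rt_refl.
  - destruct H as [q Hq]. eapply rt_trans.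
    + apply rt_step. exists (p ++ q). eapply rstep_ctx; eauto.
    + specialize (IHclos_refl_trans_1n (replace_at s p y) (subterm_replace _ _ _ _ Hs)).
      rewrite (replace_replace _ _ _ _ _ Hs) in IHclos_refl_trans_1n. auto.
Qed.

Lemma star_ctx2 {F} (E : trs F) p a b s c :
  star_step E a b -> subterm_at s p = Some c -> star_step E (replace_at s p a) (replace_at s p b).
Proof.
  intros H Hs. pose proof (star_ctx _ p _ _ H _ (subterm_replace _ _ a _ Hs)).
  rewrite (replace_replace _ _ _ _ _ Hs) in H0. auto.
Qed.

Lemma star_list {F} (E : trs F) f ts us : forall pre,
  Forall2 (star_step E) ts us -> star_step E (Fun f (pre ++ ts)) (Fun f (pre ++ us)).
Proof.
  intros pre H. revert pre. induction H; intros pre.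
  - apply rt_refl.
  - eapply rt_trans.
    + pose proof (@star_ctx F E [length pre] x y H (Fun f (pre ++ x :: l))) as Hc.
      rewrite replace_Fun, upd_app in Hc. apply Hc.
      simpl. rewrite nth_error_app2, Nat.sub_diag by lia. reflexivity.
    + specialize (IHForall2 (pre ++ [y])). rewrite <- !app_assoc in IHForall2. exact IHForall2.
Qed.

Lemma subst_mono {F} (E : trs F) (s1 s2 : nat -> term F) t :
  (forall x, star_step E (s1 x) (s2 x)) -> star_step E (subst s1 t) (subst s2 t).
Proof.
  intros Hx. induction t using term_ind'; simpl; auto.
  apply (star_list E f _ _ []). induction H; simpl; constructor; auto.
Qed.

Lemma rstep_subst {F} (E : trs F) p a b (s : nat -> term F) :
  rstep_at E p a b -> rstep_at E p (subst s a) (subst s b).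
Proof.
  intros [l [r [sg [H1 [H2 H3]]]]]. exists l, r, (fun x => subst s (sg x)). split; auto. split.
  - rewrite <- subst_subst. apply subterm_subst; auto.
  - subst b. rewrite <- subst_subst. eapply replace_subst; eauto.
Qed.

Lemma variant_step {F} (E : trs F) l r s p (sg : nat -> term F) :
  variant_of E l r -> subterm_at s p = Some (subst sg l) ->
  rstep_at E p s (replace_at s p (subst sg r)).
Proof.
  intros [l0 [r0 [HE [pi [_ [-> ->]]]]]] Hs. exists l0, r0, (fun x => sg (pi x)).
  unfold rename in *. rewrite !subst_subst in *. auto.
Qed.

Lemma sym_conv {F} (B : trs F) p a b :
  rstep_at (sym_pairs B) p a b -> conv_step B a b.
Proof.
  intros [l [r [sg [[H1|H1] [H2 H3]]]]].
  - left. exists p, l, r, sg. auto.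
  - right. exists p, r, l, sg. split; auto. subst b. split.
    + eapply subterm_replace; eauto.
    + rewrite (replace_replace _ _ _ _ _ H2). symmetry. eapply replace_self; eauto.
Qed.

Definition upd {F} (s : nat -> term F) x (v : term F) := fun y => if Nat.eq_dec y x then v else s y.

Lemma forall2_map {F} {E : trs F} {s s' : nat -> term F} ts :
  (forall b, In b ts -> star_step E (subst s b) (subst s' b)) ->
  Forall2 (star_step E) (map (subst s) ts) (map (subst s') ts).
Proof.
  induction ts; intros H; constructor. apply H; left; auto. apply IHts. intros b Hb; apply H; right; auto.
Qed.

Lemma forall2_upd {F} {E : trs F} {s s' : nat -> term F} g ts i d :
  (forall b, In b ts -> star_step E (subst s b) (subst s' b)) -> nth_error ts i = Some d ->
  star_step E (g (subst s d)) (subst s' d) ->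
  Forall2 (star_step E) (upd_nth g i (map (subst s) ts)) (map (subst s') ts).
Proof.
  revert i; induction ts; intros [|i] H1 H2 H3; simpl in H2; try discriminate; simpl.
  - inversion H2; subst. constructor; auto.
    apply forall2_map. intros b Hb. apply H1. right; auto.
  - constructor. apply H1; left; auto. apply IHts; auto. intros b Hb; apply H1; right; auto.
Qed.

Lemma NL_aux {F} (E : trs F) (s s' : nat -> term F) x : (forall y, star_step E (s y) (s' y)) ->
  forall q1 l, subterm_at l q1 = Some (Var x) ->
  star_step E (replace_at (subst s l) q1 (s' x)) (subst s' l).
Proof.
  intros Hs q1. induction q1; intros l H.
  - simpl in H. inversion H; subst. simpl. apply rt_refl.
  - destruct l as [z|f ts]; simpl in H; try discriminate.
    destruct (nth_error ts a) as [d|] eqn:E1; try discriminate.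
    simpl subst. rewrite replace_Fun. apply (star_list E f _ _ []). cbn [app].
    apply (forall2_upd (fun a0 => replace_at a0 q1 (s' x)) ts a d); auto.
    intros b _. apply subst_mono; auto.
Qed.

Lemma NL {F} (E : trs F) (s : nat -> term F) l q1 q2 x w w2 :
  subterm_at l q1 = Some (Var x) -> subterm_at (s x) q2 = Some w -> rstep E w w2 ->
  star_step E (replace_at (subst s l) (q1 ++ q2) w2) (subst (upd s x (replace_at (s x) q2 w2)) l) /\
  forall y, star_step E (s y) (upd s x (replace_at (s x) q2 w2) y).
Proof.
  intros H1 H2 [q3 H3].
  assert (Hy : forall y, star_step E (s y) (upd s x (replace_at (s x) q2 w2) y)).
  { intros y. unfold upd. destruct (Nat.eq_dec y x); [subst|apply rt_refl].
    apply rt_step. exists (q2 ++ q3). eapply rstep_ctx; eauto. }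
  split; auto.
  rewrite (replace_app _ _ _ _ _ (subterm_subst s _ _ _ H1)).
  pose proof (NL_aux E s _ x Hy q1 l H1). unfold upd at 1 in H. destruct (Nat.eq_dec x x); [|congruence].
  auto.
Qed.
Definition unif {F} (t : nat -> term F) (E : list (term F * term F)) :=
  Forall (fun e => subst t (fst e) = subst t (snd e)) E.
Definition MGU {F} (th : nat -> term F) E :=
  unif th E /\ forall tau, unif tau E -> forall x, subst tau (th x) = tau x.
Definition varsE {F} (E : list (term F * term F)) :=
  flat_map (fun e => vars (fst e) ++ vars (snd e)) E.
Definition nvars {F} (E : list (term F * term F)) := length (nodup Nat.eq_dec (varsE E)).
Definition sizeE {F} (E : list (term F * term F)) :=
  list_sum (map (fun e => size (fst e) + size (snd e)) E).
Definition substE {F} (s : nat -> term F) (E : list (term F * term F)) :=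
  map (fun e => (subst s (fst e), subst s (snd e))) E.

Lemma card_le (A B : list nat) : incl A B ->
  length (nodup Nat.eq_dec A) <= length (nodup Nat.eq_dec B).
Proof.
  intros H. apply NoDup_incl_length. apply NoDup_nodup.
  intros y Hy. apply nodup_In in Hy. apply nodup_In. auto.
Qed.

Lemma card_lt (A B : list nat) x : incl A B -> In x B -> ~ In x A ->
  length (nodup Nat.eq_dec A) < length (nodup Nat.eq_dec B).
Proof.
  intros H Hx Hn. change (length (x :: nodup Nat.eq_dec A) <= length (nodup Nat.eq_dec B)).
  apply NoDup_incl_length.
  - constructor. rewrite nodup_In; auto. apply NoDup_nodup.
  - intros y [<-|Hy]; apply nodup_In; auto. apply nodup_In in Hy. auto.
Qed.

Lemma unif_ext {F} (s1 s2 : nat -> term F) E : (forall y, s1 y = s2 y) -> unif s1 E -> unif s2 E.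
Proof.
  intros H. unfold unif. apply Forall_impl. intros e He.
  rewrite (subst_ext_vars s2 s1), (subst_ext_vars s2 s1 (snd e)); auto.
Qed.

Lemma unif_substE {F} (tau s : nat -> term F) E :
  unif tau (substE s E) <-> unif (fun y => subst tau (s y)) E.
Proof.
  unfold unif, substE. rewrite Forall_map. split; apply Forall_impl; intros e; simpl;
  rewrite !subst_subst; auto.
Qed.

Lemma MGU_equiv {F} (th : nat -> term F) E1 E2 :
  (forall tau, unif tau E1 <-> unif tau E2) -> MGU th E1 -> MGU th E2.
Proof. intros H [H1 H2]. split. apply H; auto. intros tau Ht. apply H2. apply H; auto. Qed.

Lemma elim_step {F} (th' : nat -> term F) x t E :
  ~ In x (vars t) -> MGU th' (substE (upd Var x t) E) ->
  MGU (fun y => subst th' (upd Var x t y)) ((Var x, t) :: E).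
Proof.
  intros Hx [H1 H2].
  assert (Ht : forall s : nat -> term F, subst (fun y => subst s (upd Var x t y)) t = subst s t).
  { intros s. apply subst_ext_vars. intros y Hy. unfold upd.
    destruct (Nat.eq_dec y x); subst; [contradiction|reflexivity]. }
  split.
  - constructor.
    + simpl. unfold upd at 1. destruct (Nat.eq_dec x x); [|congruence]. rewrite Ht. auto.
    + apply unif_substE. auto.
  - intros tau Htau. inversion Htau; subst. simpl in H3.
    assert (Hs : forall y, subst tau (upd Var x t y) = tau y).
    { intros y. unfold upd. destruct (Nat.eq_dec y x); subst; auto. }
    assert (Hu : unif tau (substE (upd Var x t) E)).
    { apply unif_substE. eapply unif_ext; [|exact H4]. intros y; rewrite Hs; auto. }
    intros y. rewrite subst_subst. rewrite (subst_ext_vars _ tau).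
    apply Hs. intros z _. apply H2; auto.
Qed.

Lemma unif_combine {F} (tau : nat -> term F) ts us : length ts = length us ->
  (unif tau (combine ts us) <-> map (subst tau) ts = map (subst tau) us).
Proof.
  revert us; induction ts; intros [|u us] Hl; simpl in *; try discriminate.
  - split; constructor.
  - injection Hl; intros Hl'. unfold unif in *. rewrite Forall_cons_iff, IHts; auto. simpl.
    split. intros [-> ->]; auto. intros H; injection H; auto.
Qed.

Lemma varsE_combine {F} (ts us : list (term F)) :
  incl (varsE (combine ts us)) (flat_map (@vars F) ts ++ flat_map (@vars F) us).
Proof.
  revert us; induction ts; intros [|u us]; simpl; try apply incl_nil_l.
  intros y Hy. apply in_app_or in Hy. destruct Hy as [Hy|Hy].
  - apply in_app_or in Hy; destruct Hy; apply in_or_app; [left|right]; apply in_or_app; left; auto.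
  - apply IHts in Hy. apply in_app_or in Hy; destruct Hy; apply in_or_app; [left|right]; apply in_or_app; right; auto.
Qed.

Lemma sizeE_combine {F} (ts us : list (term F)) :
  sizeE (combine ts us) <= list_sum (map size ts) + list_sum (map size us).
Proof.
  revert us; induction ts as [|a ts IHts]; intros [|u us]; unfold sizeE in *; simpl; try lia.
  specialize (IHts us). lia.
Qed.

Lemma sizeE_app {F} (E1 E2 : list (term F * term F)) : sizeE (E1 ++ E2) = sizeE E1 + sizeE E2.
Proof. unfold sizeE. rewrite map_app, list_sum_app. auto. Qed.

Lemma varsE_app {F} (E1 E2 : list (term F * term F)) : varsE (E1 ++ E2) = varsE E1 ++ varsE E2.
Proof. unfold varsE. apply flat_map_app. Qed.

Lemma var_case {F} n x (b : term F) E0 :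
  b <> Var x -> nvars ((Var x, b) :: E0) <= n ->
  (forall E' : list (term F * term F), nvars E' < n -> (exists tau, unif tau E') -> exists th, MGU th E') ->
  (exists tau, unif tau ((Var x, b) :: E0)) -> exists th, MGU th ((Var x, b) :: E0).
Proof.
  intros Hb Hn IH [tau Htau].
  inversion Htau as [|e E1 He HE0]; subst. simpl in He.
  destruct (in_dec Nat.eq_dec x (vars b)) as [Hin|Hnin].
  - exfalso. pose proof (size_var_lt tau b x Hin Hb). rewrite He in H. lia.
  - destruct (IH (substE (upd Var x b) E0)) as [th' Hth'].
    + eapply Nat.lt_le_trans; [|exact Hn]. unfold nvars. apply card_lt with (x := x).
      * intros y Hy. unfold varsE, substE in Hy. rewrite flat_map_concat_map, map_map in Hy.
        apply in_concat in Hy. destruct Hy as [l [Hl Hyl]]. apply in_map_iff in Hl.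
        destruct Hl as [e [<- He']]. simpl in Hyl.
        simpl. right. apply in_or_app.
        apply in_app_or in Hyl. destruct Hyl as [Hy|Hy]; apply vars_subst in Hy;
        destruct Hy as [z [Hz1 Hz2]]; unfold upd in Hz2; destruct (Nat.eq_dec z x);
        try (left; auto; fail); right; simpl in Hz2; destruct Hz2 as [<-|[]];
        unfold varsE; apply in_flat_map; exists e; split; auto; apply in_or_app; auto.
      * simpl. auto.
      * intros Hy. unfold varsE, substE in Hy. rewrite flat_map_concat_map, map_map in Hy.
        apply in_concat in Hy. destruct Hy as [l [Hl Hyl]]. apply in_map_iff in Hl.
        destruct Hl as [e [<- He']]. simpl in Hyl.
        apply in_app_or in Hyl. destruct Hyl as [Hy|Hy]; apply vars_subst in Hy;
        destruct Hy as [z [Hz1 Hz2]]; unfold upd in Hz2; destruct (Nat.eq_dec z x); auto;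
        simpl in Hz2; destruct Hz2 as [Hz2|[]]; congruence.
    + exists tau. apply unif_substE. eapply unif_ext; [|exact HE0].
      intros y. unfold upd. destruct (Nat.eq_dec y x); subst; auto.
    + eexists. apply elim_step; eauto.
Qed.

Lemma mgu_exists_aux {F} n : forall (E : list (term F * term F)), nvars E < n ->
  forall m, sizeE E < m -> (exists tau, unif tau E) -> exists th, MGU th E.
Proof.
  induction n as [|n IHn]; intros E Hn m; [lia|]. revert E Hn.
  induction m as [|m IHm]; intros E Hn Hm Hu; [lia|].
  destruct E as [|[a b] E0].
  - exists Var. split. constructor. intros; auto.
  - destruct a as [x|f ts]; destruct b as [y|g us].
    + destruct (Nat.eq_dec x y).
      * subst y. destruct (IHm E0) as [th Hth].
        -- eapply Nat.le_lt_trans; [|exact Hn]. apply card_le. intros z Hz. simpl. right. right. auto.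
        -- unfold sizeE in *. simpl in Hm. lia.
        -- destruct Hu as [tau Hu]. inversion Hu; subst. eauto.
        -- exists th. eapply MGU_equiv; [|exact Hth]. intros tau. unfold unif.
           rewrite Forall_cons_iff. simpl. tauto.
      * apply (var_case n); [congruence|lia|intros E' H1' H2'; exact (IHn E' H1' (S (sizeE E')) (Nat.lt_succ_diag_r _) H2')|exact Hu].
    + apply (var_case n); [congruence|lia|intros E' H1' H2'; exact (IHn E' H1' (S (sizeE E')) (Nat.lt_succ_diag_r _) H2')|exact Hu].
    + destruct (var_case n y (Fun f ts) E0) as [th Hth]; [congruence| |intros E' H1' H2'; exact (IHn E' H1' (S (sizeE E')) (Nat.lt_succ_diag_r _) H2')| |].
      * eapply Nat.le_trans; [|apply (proj1 (Nat.lt_succ_r _ _) Hn)]. apply card_le.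
        unfold varsE. cbn [flat_map fst snd]. intros z Hz. repeat rewrite in_app_iff in *. tauto.
      * destruct Hu as [tau Hu]. exists tau. unfold unif in *. rewrite Forall_cons_iff in *. simpl in *.
        destruct Hu; split; auto.
      * exists th. eapply MGU_equiv; [|exact Hth]. intros tau. unfold unif.
        rewrite !Forall_cons_iff. simpl. split; intros [? ?]; auto.
    + destruct Hu as [tau Hu]. pose proof Hu as Hu'. inversion Hu; subst. simpl in H1.
      injection H1; intros Hmap Hfg. subst g.
      assert (Hl : length ts = length us).
      { rewrite <- (length_map (subst tau) ts), <- (length_map (subst tau) us). congruence. }
      destruct (IHm (combine ts us ++ E0)) as [th Hth].
      * eapply Nat.le_lt_trans; [|exact Hn]. apply card_le. rewrite varsE_app.
        intros z Hz. apply in_app_or in Hz. destruct Hz as [Hz|Hz].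
        -- apply varsE_combine in Hz. unfold varsE. cbn [flat_map fst snd]. rewrite !vars_Fun.
           rewrite !in_app_iff in *. tauto.
        -- unfold varsE. cbn [flat_map fst snd]. rewrite !in_app_iff. tauto.
      * rewrite sizeE_app. pose proof (sizeE_combine ts us). unfold sizeE in *. simpl in Hm. lia.
      * exists tau. unfold unif. rewrite Forall_app. split; auto. apply unif_combine; auto.
      * exists th. eapply MGU_equiv; [|exact Hth]. intros tau'. unfold unif.
        rewrite Forall_app, Forall_cons_iff. fold (unif tau' (combine ts us)).
        rewrite unif_combine; auto. simpl. split.
        -- intros [H1' H2']. split; auto. f_equal; auto.
        -- intros [H1' H2']. injection H1'; auto.
Qed.

Lemma mgu_exists {F} (tau : nat -> term F) a b :
  subst tau a = subst tau b ->
  exists th, unifies th a b /\ forall tau', unifies tau' a b -> forall x, subst tau' (th x) = tau' x.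
Proof.
  intros H. destruct (mgu_exists_aux (S (nvars [(a, b)])) [(a,b)] (Nat.lt_succ_diag_r _)
    (S (sizeE [(a,b)])) (Nat.lt_succ_diag_r _)) as [th [H1 H2]].
  - exists tau. constructor; auto.
  - exists th. split.
    + inversion H1; auto.
    + intros tau' Ht. apply H2. constructor; auto.
Qed.
Definition maxl (l : list nat) := fold_right Nat.max 0 l.
Lemma maxl_In x l : In x l -> x <= maxl l.
Proof. induction l; simpl; [intros []|intros [->|H]]; try lia. specialize (IHl H). lia. Qed.

Definition swp (N x : nat) := if x <? N then x + N else if x <? N + N then x - N else x.
Lemma swp_small N x : x < N -> swp N x = x + N.
Proof. intros H. unfold swp. destruct (Nat.ltb_spec x N); lia. Qed.
Lemma swp_inv N x : swp N (swp N x) = x.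
Proof.
  unfold swp. destruct (Nat.ltb_spec x N).
  - destruct (Nat.ltb_spec (x + N) N); [lia|]. destruct (Nat.ltb_spec (x+N) (N+N)); lia.
  - destruct (Nat.ltb_spec x (N+N)).
    + destruct (Nat.ltb_spec (x - N) N); lia.
    + destruct (Nat.ltb_spec x N); [lia|]. destruct (Nat.ltb_spec x (N+N)); lia.
Qed.

Lemma vars_rename {F} pi (t : term F) y :
  In y (vars (rename pi t)) -> exists z, In z (vars t) /\ y = pi z.
Proof.
  unfold rename. intros H. apply vars_subst in H. destruct H as [z [H1 H2]].
  simpl in H2. destruct H2 as [<-|[]]. eauto.
Qed.

Lemma overlap_instance {F} (R E2 : trs F) l2 r2 (sg : nat -> term F) q0 a' l3 r3 (dl : nat -> term F) :
  variant_of E2 l2 r2 -> R l3 r3 -> subterm_at l2 q0 = Some a' -> (forall x, a' <> Var x) ->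
  q0 <> [] -> subst sg a' = subst dl l3 ->
  (forall q w, q <> [] -> subterm_at (subst dl l3) q = Some w -> normal_form R w) ->
  exists t0 s0 u0, critical_peak R E2 t0 s0 u0 q0 /\ prime_peak R s0 q0 /\
   exists rho, replace_at (subst sg l2) q0 (subst dl r3) = subst rho t0 /\ subst sg r2 = subst rho u0.
Proof.
  intros Hv HR Ha Hnv Hq Heq Hnf.
  set (V := vars l2 ++ vars r2 ++ vars l3 ++ vars r3).
  set (N := S (maxl V)).
  assert (HV : forall x, In x V -> x < N).
  { intros x Hx. apply maxl_In in Hx. unfold N. lia. }
  set (pi := swp N).
  set (l3' := rename pi l3). set (r3' := rename pi r3).
  set (tau := fun y => if y <? N then sg y else dl (pi y)).
  assert (Hlow : forall t, incl (vars t) V -> subst tau t = subst sg t).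
  { intros t Ht. apply subst_ext_vars. intros y Hy. unfold tau.
    destruct (Nat.ltb_spec y N); auto. specialize (HV y (Ht y Hy)). lia. }
  assert (Hhigh : forall t, incl (vars t) V -> subst tau (rename pi t) = subst dl t).
  { intros t Ht. unfold rename. rewrite subst_subst. apply subst_ext_vars. intros y Hy.
    specialize (HV y (Ht y Hy)). simpl. unfold tau, pi. rewrite swp_small by auto.
    destruct (Nat.ltb_spec (y + N) N); [lia|]. rewrite <- (swp_small N y) by auto.
    rewrite swp_inv. auto. }
  assert (Hl2 : subst tau l2 = subst sg l2).
  { apply Hlow. unfold V. intros y Hy; rewrite !in_app_iff; auto. }
  assert (Hr2 : subst tau r2 = subst sg r2).
  { apply Hlow. unfold V. intros y Hy; rewrite !in_app_iff; auto. }
  assert (Ha' : subst tau a' = subst sg a').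
  { apply Hlow. unfold V. intros y Hy. apply (subterm_vars _ _ _ Ha) in Hy. rewrite !in_app_iff; auto. }
  assert (Hl3 : subst tau l3' = subst dl l3).
  { apply Hhigh. unfold V. intros y Hy; rewrite !in_app_iff; auto. }
  assert (Hr3 : subst tau r3' = subst dl r3).
  { apply Hhigh. unfold V. intros y Hy; rewrite !in_app_iff; auto. }
  destruct (mgu_exists tau l3' a') as [th [Hth1 Hth2]].
  { rewrite Hl3, Ha'. auto. }
  assert (Habs : forall t, subst tau (subst th t) = subst tau t).
  { intros t. rewrite subst_subst. apply subst_ext_vars. intros y _. apply Hth2. unfold unifies. rewrite Hl3, Ha'. auto. }
  assert (Hsub : subterm_at (subst th l2) q0 = Some (subst th a')) by (apply subterm_subst; auto).
  exists (replace_at (subst th l2) q0 (subst th r3')), (subst th l2), (subst th r2).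
  split; [|split].
  - exists l3', r3', l2, r2, th, a'.
    split; [exists l3, r3; split; auto; exists pi; split; [exists pi; intros; unfold pi; rewrite swp_inv; auto|auto]|].
    split; auto.
    split.
    { intros x Hx Hx2. rewrite in_app_iff in Hx.
      assert (Hbig : N <= x).
      { destruct Hx as [Hx|Hx]; apply vars_rename in Hx; destruct Hx as [z [Hz ->]];
        unfold pi; rewrite swp_small; try lia; apply HV; unfold V; rewrite !in_app_iff; auto. }
      assert (x < N); [|lia]. apply HV. unfold V. rewrite !in_app_iff. rewrite in_app_iff in Hx2. tauto. }
    split; auto. split; auto. split; [intros ->; congruence|].
    split; [|auto].
    split; auto. intros tau' Ht'. exists tau'. intros x. symmetry. apply Hth2. auto.
  - intros sp Hsp q w Hq' Hw. rewrite Hsub in Hsp. injection Hsp; intros <-.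
    pose proof (subterm_subst tau _ _ _ Hw) as Hw'. rewrite Habs, Ha', Heq in Hw'.
    specialize (Hnf q _ Hq' Hw'). intros w1 [p1 Hp1]. apply (Hnf (subst tau w1)).
    exists p1. apply rstep_subst. auto.
  - exists tau. split.
    + rewrite (replace_subst _ _ _ _ _ Hsub). rewrite !Habs, Hl2, Hr3. auto.
    + rewrite Habs, Hr2. auto.
Qed.
Lemma red_up {F} (R : trs F) a b q b1 :
  subterm_at a q = Some b -> rstep R b b1 -> exists a1, rstep R a a1.
Proof. intros H [p1 Hp]. eexists. exists (q ++ p1). eapply rstep_ctx; eauto. Qed.

Lemma innermost {F} (R : trs F) w : (exists w1, rstep R w w1) ->
  exists q l r dl, R l r /\ subterm_at w q = Some (subst dl l) /\
    (forall q2 w2, q2 <> [] -> subterm_at (subst dl l) q2 = Some w2 -> normal_form R w2).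
Proof.
  induction w using term_ind'; intros [w1 Hw1].
  - destruct Hw1 as [p1 [l [r [dl [H1 [H2 H3]]]]]].
    destruct p1; simpl in H2; try discriminate.
    exists [], l, r, dl. split; auto. split; auto. injection H2; intros He. rewrite <- He.
    intros q2 w2 Hq2 Hs. destruct q2; [congruence|discriminate].
  - destruct (classic (exists q2 w2 w3, q2 <> [] /\ subterm_at (Fun f ts) q2 = Some w2 /\ rstep R w2 w3))
      as [[q2 [w2 [w3 [Hq2 [Hs Hr]]]]]|Hno].
    + destruct q2 as [|i q2]; [congruence|]. simpl in Hs.
      destruct (nth_error ts i) as [a|] eqn:E; try discriminate.
      rewrite Forall_forall in H. destruct (H a (nth_error_In _ _ E)) as [q [l [r [dl [H1 [H2 H3]]]]]].
      * eapply red_up; eauto.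
      * exists (i :: q), l, r, dl. simpl. rewrite E. auto.
    + destruct Hw1 as [p1 [l [r [dl [H1 [H2 H3]]]]]].
      destruct p1 as [|i p1].
      * exists [], l, r, dl. split; auto. split; auto. simpl in H2. injection H2; intros <-.
        intros q2 w2 Hq2 Hs w3 Hr. apply Hno. exists q2, w2, w3. auto.
      * exfalso. apply Hno. exists (i :: p1), (subst dl l), (subst dl r). split; [congruence|].
        split; auto. exists [], l, r, dl. auto.
Qed.

Lemma not_prime {F} (R : trs F) s p sp : subterm_at s p = Some sp -> ~ prime_peak R s p ->
  exists q w w1, q <> [] /\ subterm_at sp q = Some w /\ rstep R w w1.
Proof.
  intros Hs Hn. apply NNPP. intros Hc. apply Hn. intros sp' Hsp' q w Hq Hw w1 Hr.
  rewrite Hs in Hsp'. injection Hsp'; intros <-. apply Hc. exists q, w, w1. auto.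
Qed.

Lemma var_core {F} (R : trs F) s p (sg : nat -> term F) l r q1 q2 x w w2 :
  subterm_at s p = Some (subst sg l) -> subterm_at l q1 = Some (Var x) ->
  subterm_at (sg x) q2 = Some w -> rstep R w w2 ->
  exists sg', star_step R (replace_at s (p ++ q1 ++ q2) w2) (replace_at s p (subst sg' l)) /\
    star_step R (replace_at s p (subst sg r)) (replace_at s p (subst sg' r)).
Proof.
  intros Hs H1 H2 H3. destruct (NL R sg l q1 q2 x w w2 H1 H2 H3) as [Ha Hb].
  eexists. split.
  - rewrite (replace_app _ _ _ _ _ Hs). eapply star_ctx2; eauto.
  - eapply star_ctx2; eauto. apply subst_mono. auto.
Qed.

Lemma var_join {F} (R : trs F) s p (sg : nat -> term F) l r q1 q2 x w w2 :
  variant_of R l r ->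
  subterm_at s p = Some (subst sg l) -> subterm_at l q1 = Some (Var x) ->
  subterm_at (sg x) q2 = Some w -> rstep R w w2 ->
  joinable R (replace_at s (p ++ q1 ++ q2) w2) (replace_at s p (subst sg r)).
Proof.
  intros Hv Hs H1 H2 H3. destruct (var_core R s p sg l r q1 q2 x w w2 Hs H1 H2 H3) as [sg' [Ha Hb]].
  exists (replace_at s p (subst sg' r)). split; auto.
  eapply rt_trans; [exact Ha|]. apply rt_step. exists p.
  pose proof (variant_step R l r (replace_at s p (subst sg' l)) p sg' Hv (subterm_replace _ _ _ _ Hs)).
  rewrite (replace_replace _ _ _ _ _ Hs) in H. auto.
Qed.

Lemma var_joinmod {F} (R B : trs F) s p (sg : nat -> term F) l r q1 q2 x w w2 :
  variant_of (sym_pairs B) l r ->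
  subterm_at s p = Some (subst sg l) -> subterm_at l q1 = Some (Var x) ->
  subterm_at (sg x) q2 = Some w -> rstep R w w2 ->
  joinable_mod R B (replace_at s (p ++ q1 ++ q2) w2) (replace_at s p (subst sg r)).
Proof.
  intros Hv Hs H1 H2 H3. destruct (var_core R s p sg l r q1 q2 x w w2 Hs H1 H2 H3) as [sg' [Ha Hb]].
  exists (replace_at s p (subst sg' l)), (replace_at s p (subst sg' r)). split; auto. split; auto.
  apply rt_step. eapply sym_conv.
  pose proof (variant_step _ l r (replace_at s p (subst sg' l)) p sg' Hv (subterm_replace _ _ _ _ Hs)).
  rewrite (replace_replace _ _ _ _ _ Hs) in H. exact H.
Qed.

Lemma pair_ctx {F} (E : trs F) s p (sg rho : nat -> term F) l r q' X t0 u0 :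
  E t0 u0 -> subterm_at s p = Some (subst sg l) ->
  replace_at (subst sg l) q' X = subst rho t0 -> subst sg r = subst rho u0 ->
  rstep E (replace_at s (p ++ q') X) (replace_at s p (subst sg r)).
Proof.
  intros HE Hs H1 H2. exists p, t0, u0, rho. split; auto.
  rewrite (replace_app _ _ _ _ _ Hs), H1. split.
  - eapply subterm_replace; eauto.
  - rewrite (replace_replace _ _ _ _ _ Hs). congruence.
Qed.
Lemma peak_facts {F} (R1 R2 : trs F) t s u p :
  critical_peak R1 R2 t s u p ->
  exists l1 r1 l2 r2 sg, variant_of R1 l1 r1 /\ variant_of R2 l2 r2 /\
    subterm_at s p = Some (subst sg l1) /\ s = subst sg l2 /\
    t = replace_at s p (subst sg r1) /\ u = subst sg r2.
Proof.
  intros [l1 [r1 [l2 [r2 [sg [l2p [Hv1 [Hv2 [_ [Hsub [_ [_ [[Hu _] [Hs [Ht Hu']]]]]]]]]]]]]]].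
  exists l1, r1, l2, r2, sg. repeat split; auto.
  rewrite Hs, Hu. apply subterm_subst; auto.
Qed.

Lemma root_step_inst {F} (E : trs F) l r (dl : nat -> term F) : E l r -> rstep E (subst dl l) (subst dl r).
Proof. intros H. exists [], l, r, dl. simpl. auto. Qed.

Lemma root_step {F} (E : trs F) a b : E a b -> rstep E a b.
Proof. intros H. exists [], a, b, Var. rewrite !subst_Var. simpl. auto. Qed.

Lemma inner_setup {F} (R : trs F) s p sp : subterm_at s p = Some sp -> ~ prime_peak R s p ->
  exists q' l3 r3 dl, R l3 r3 /\ q' <> [] /\ subterm_at sp q' = Some (subst dl l3) /\
    (forall q2 w2, q2 <> [] -> subterm_at (subst dl l3) q2 = Some w2 -> normal_form R w2) /\
    rstep_at R (p ++ q') s (replace_at s (p ++ q') (subst dl r3)).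
Proof.
  intros Hs Hn. destruct (not_prime R s p sp Hs Hn) as [q [w [w1 [Hq [Hw Hr]]]]].
  destruct (innermost R w (ex_intro _ w1 Hr)) as [q3 [l3 [r3 [dl [H1 [H2 H3]]]]]].
  exists (q ++ q3), l3, r3, dl. split; auto. split.
  { intros He. apply app_eq_nil in He. tauto. }
  assert (Hsq : subterm_at sp (q ++ q3) = Some (subst dl l3)) by (rewrite (subterm_app_Some _ _ _ _ Hw); auto).
  split; auto. split; auto.
  exists l3, r3, dl. split; auto. split; auto. rewrite (subterm_app_Some _ _ _ _ Hs). auto.
Qed.

Theorem lemma3p14 (F : Type) (R B : trs F) :
  is_trs R -> left_linear R -> same_vars_es B ->
  (forall s t u p, critical_peak R (sym_pairs B) t s u p ->
     exists v, nabla R s t v /\ tnabla R B s v u) /\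
  (forall s t u p, critical_peak (sym_pairs B) R t s u p ->
     exists v, tnabla R B s v t /\ nabla R s v u).
Proof.
  intros _ _ _. split.
  - intros s t u p Hcp. pose proof Hcp as Hcp0.
    destruct (peak_facts _ _ _ _ _ _ Hcp) as [l1 [r1 [l2 [r2 [sg [Hv1 [Hv2 [Hsp [Hs [Ht Hu]]]]]]]]]].
    assert (Hst : rstep R s t) by (exists p; rewrite Ht; apply (variant_step _ l1 r1 s p sg Hv1 Hsp)).
    assert (Hsu : conv_step B s u).
    { eapply sym_conv. rewrite Hu. apply (variant_step _ _ _ s [] sg Hv2). simpl. congruence. }
    destruct (classic (prime_peak R s p)) as [Hpr|Hnpr].
    + exists t. split.
      * split; [apply t_step; auto|]. split; [apply t_step; auto|]. left. exists t. split; apply rt_refl.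
      * split; [apply t_step; auto|]. split; [apply rt_step; auto|]. right. left.
        apply root_step. exists s, p. auto.
    + destruct (inner_setup R s p _ Hsp Hnpr) as [q' [l3 [r3 [dl [HR3 [Hq' [Hw' [Hnf Hsv]]]]]]]].
      set (v := replace_at s (p ++ q') (subst dl r3)).
      assert (Hw2 : rstep R (subst dl l3) (subst dl r3)) by (apply root_step_inst; auto).
      exists v. split.
      * split; [apply t_step; auto|]. split; [apply t_step; exists (p ++ q'); auto|].
        destruct (pos_split sg l1 q' _ Hw') as [[a' [Ha1 [Ha2 Ha3]]]|[q1 [q2 [x [Hqq [Hx1 Hx2]]]]]].
        -- destruct (overlap_instance R R l1 r1 sg q' a' l3 r3 dl Hv1 HR3 Ha1 Ha2 Hq' (eq_sym Ha3) Hnf)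
             as [t0 [s0 [u0 [Hc0 [Hp0 [rho [E1 E2]]]]]]].
           right. right. rewrite Ht. unfold v. eapply pair_ctx; eauto. exists s0, q'. auto.
        -- left. unfold v. rewrite Hqq.
           destruct (var_join R s p sg l1 r1 q1 q2 x _ _ Hv1 Hsp Hx1 Hx2 Hw2) as [z [Hz1 Hz2]].
           exists z. rewrite Ht. auto.
      * split; [apply t_step; exists (p ++ q'); auto|]. split; [apply rt_step; auto|].
        assert (Hw3 : subterm_at (subst sg l2) (p ++ q') = Some (subst dl l3)).
        { rewrite <- Hs. rewrite (subterm_app_Some _ _ _ _ Hsp). auto. }
        destruct (pos_split sg l2 (p ++ q') _ Hw3) as [[a' [Ha1 [Ha2 Ha3]]]|[q1 [q2 [x [Hqq [Hx1 Hx2]]]]]].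
        -- assert (Hpq : p ++ q' <> []) by (intros He; apply app_eq_nil in He; tauto).
           destruct (overlap_instance R (sym_pairs B) l2 r2 sg (p ++ q') a' l3 r3 dl Hv2 HR3 Ha1 Ha2 Hpq (eq_sym Ha3) Hnf)
             as [t0 [s0 [u0 [Hc0 [Hp0 [rho [E1 E2]]]]]]].
           right. left. rewrite Hu. unfold v.
           pose proof (pair_ctx (PCPpm R (sym_pairs B)) s [] sg rho l2 r2 (p ++ q') (subst dl r3) t0 u0) as Hpc.
           simpl in Hpc. apply Hpc; [exists s0, (p ++ q'); auto|rewrite Hs; reflexivity|exact E1|exact E2].
        -- left. unfold v. rewrite Hqq.
           pose proof (var_joinmod R B s [] sg l2 r2 q1 q2 x (subst dl l3) (subst dl r3) Hv2) as Hj. simpl in Hj.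
           rewrite Hu. apply Hj; auto. rewrite Hs; reflexivity.
  - intros s t u p Hcp. pose proof Hcp as Hcp0.
    destruct (peak_facts _ _ _ _ _ _ Hcp) as [l1 [r1 [l2 [r2 [sg [Hv1 [Hv2 [Hsp [Hs [Ht Hu]]]]]]]]]].
    assert (Hst : conv_step B s t) by (eapply sym_conv; rewrite Ht; apply (variant_step _ l1 r1 s p sg Hv1 Hsp)).
    assert (Hsu : rstep R s u).
    { exists []. rewrite Hu. apply (variant_step _ _ _ s [] sg Hv2). simpl. congruence. }
    destruct (classic (prime_peak R s p)) as [Hpr|Hnpr].
    + exists u. split.
      * split; [apply t_step; auto|]. split; [apply rt_step; auto|]. right. right.
        apply root_step. exists s, p. auto.
      * split; [apply t_step; auto|]. split; [apply t_step; auto|]. left. exists u. split; apply rt_refl.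
    + destruct (inner_setup R s p _ Hsp Hnpr) as [q' [l3 [r3 [dl [HR3 [Hq' [Hw' [Hnf Hsv]]]]]]]].
      set (v := replace_at s (p ++ q') (subst dl r3)).
      assert (Hw2 : rstep R (subst dl l3) (subst dl r3)) by (apply root_step_inst; auto).
      exists v. split.
      * split; [apply t_step; exists (p ++ q'); auto|]. split; [apply rt_step; auto|].
        destruct (pos_split sg l1 q' _ Hw') as [[a' [Ha1 [Ha2 Ha3]]]|[q1 [q2 [x [Hqq [Hx1 Hx2]]]]]].
        -- destruct (overlap_instance R (sym_pairs B) l1 r1 sg q' a' l3 r3 dl Hv1 HR3 Ha1 Ha2 Hq' (eq_sym Ha3) Hnf)
             as [t0 [s0 [u0 [Hc0 [Hp0 [rho [E1 E2]]]]]]].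
           right. left. rewrite Ht. unfold v. eapply pair_ctx; eauto. exists s0, q'. auto.
        -- left. unfold v. rewrite Hqq. rewrite Ht.
           apply (var_joinmod R B s p sg l1 r1 q1 q2 x _ _ Hv1 Hsp Hx1 Hx2 Hw2).
      * split; [apply t_step; exists (p ++ q'); auto|]. split; [apply t_step; auto|].
        assert (Hw3 : subterm_at (subst sg l2) (p ++ q') = Some (subst dl l3)).
        { rewrite <- Hs. rewrite (subterm_app_Some _ _ _ _ Hsp). auto. }
        destruct (pos_split sg l2 (p ++ q') _ Hw3) as [[a' [Ha1 [Ha2 Ha3]]]|[q1 [q2 [x [Hqq [Hx1 Hx2]]]]]].
        -- assert (Hpq : p ++ q' <> []) by (intros He; apply app_eq_nil in He; tauto).
           destruct (overlap_instance R R l2 r2 sg (p ++ q') a' l3 r3 dl Hv2 HR3 Ha1 Ha2 Hpq (eq_sym Ha3) Hnf)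
             as [t0 [s0 [u0 [Hc0 [Hp0 [rho [E1 E2]]]]]]].
           right. left. rewrite Hu. unfold v.
           pose proof (pair_ctx (PCP R) s [] sg rho l2 r2 (p ++ q') (subst dl r3) t0 u0) as Hpc.
           simpl in Hpc. apply Hpc; [exists s0, (p ++ q'); auto|rewrite Hs; reflexivity|exact E1|exact E2].
        -- left. unfold v. rewrite Hqq.
           pose proof (var_join R s [] sg l2 r2 q1 q2 x (subst dl l3) (subst dl r3) Hv2) as Hj. simpl in Hj.
           rewrite Hu. apply Hj; auto. rewrite Hs; reflexivity.
Qed.
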